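(* Let $K, L$ be compact convex subsets of $\mathbb{R}^n$ and let $\psi: \mathbb{R}^n \rightarrow \mathbb{R}^n$ be a nonsingular linear transformation. Then $L_u$ contains a translate of $K_u$ for every unit vector $u$ if and only if $(\psi L)_u$ contains a translate of $(\psi K)_u$ for every unit vector $u$.
   Context: For a unit vector $u$ and a set $S\subseteq\mathbb{R}^n$, $S_u$ denotes the orthogonal projection of $S$ onto the hyperplane $u^\perp$. *)

(* Defs.v *)
From HB Require Import structures.
From mathcomp Require Import all_boot all_order all_algebra.
From mathcomp Require Import all_classical all_reals all_analysis.
Set Implicit Arguments. Unset Strict Implicit. Unset Printing Implicit Defensive.
Import Order.TTheory GRing.Theory Num.Theory.
Import numFieldNormedType.Exports.
Local Open Scope classical_set_scope.
Local Open Scope ring_scope.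

Definition dotv (R : realType) (n : nat) (x y : 'rV[R]_n) : R := (x *m y^T) 0 0.

Definition unit_vec (R : realType) (n : nat) (u : 'rV[R]_n) : Prop := dotv u u = 1.

Definition proj_perp (R : realType) (n : nat) (u x : 'rV[R]_n) : 'rV[R]_n :=
  x - dotv x u *: u.

Definition proj_set (R : realType) (n : nat) (S : set 'rV[R]_n) (u : 'rV[R]_n)
  : set 'rV[R]_n := proj_perp u @` S.

Definition contains_translate (R : realType) (n : nat) (A B : set 'rV[R]_n) : Prop :=
  exists t : 'rV[R]_n, (fun x => x + t) @` B `<=` A.

Definition lin_image (R : realType) (n : nat) (M : 'M[R]_n) (S : set 'rV[R]_n)
  : set 'rV[R]_n := (fun x => x *m M) @` S.

(* Main.v *)
Require Import Defs.
From HB Require Import structures.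
From mathcomp Require Import all_boot all_order all_algebra.
From mathcomp Require Import all_classical all_reals all_analysis.
Import Order.TTheory GRing.Theory Num.Theory.
Import numFieldNormedType.Exports.
Local Open Scope classical_set_scope.
Local Open Scope ring_scope.

Section Aux.
Variables (R : realType) (n : nat).
Implicit Types (x y u v : 'rV[R]_n).

Lemma dotvDl x y u : dotv (x + y) u = dotv x u + dotv y u.
Proof. by rewrite /dotv mulmxDl mxE. Qed.

Lemma dotvZl (c : R) x u : dotv (c *: x) u = c * dotv x u.
Proof. by rewrite /dotv -scalemxAl mxE. Qed.

Lemma dotvZr (c : R) x u : dotv x (c *: u) = c * dotv x u.
Proof. by rewrite /dotv linearZ /= -scalemxAr mxE. Qed.

Lemma dotv_sum x : dotv x x = \sum_j (x 0 j) ^+ 2.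
Proof. by rewrite /dotv mxE; apply: eq_bigr => j _; rewrite mxE expr2. Qed.

Lemma dotv_eq0 x : dotv x x = 0 -> x = 0.
Proof.
rewrite dotv_sum => /eqP; rewrite psumr_eq0; last by move=> j _; exact: sqr_ge0.
move=> /allP H; apply/rowP => j; rewrite mxE.
have := H j (mem_index_enum j); rewrite sqrf_eq0 => /eqP.
by [].
Qed.

Lemma dotv_ge0 x : 0 <= dotv x x.
Proof. by rewrite dotv_sum; apply: sumr_ge0 => j _; exact: sqr_ge0. Qed.

Lemma projD u x y : proj_perp u (x + y) = proj_perp u x + proj_perp u y.
Proof. rewrite /proj_perp dotvDl scalerDl; by rewrite opprD addrACA. Qed.

Lemma projZ u (c : R) x : proj_perp u (c *: x) = c *: proj_perp u x.
Proof. by rewrite /proj_perp dotvZl scalerBr scalerA. Qed.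

Lemma proj_self u : unit_vec u -> proj_perp u u = 0.
Proof. by move=> hu; rewrite /proj_perp hu scale1r subrr. Qed.

Lemma main (M : 'M[R]_n) (K L : set 'rV[R]_n) : M \in unitmx ->
  (forall v, unit_vec v -> contains_translate (proj_set L v) (proj_set K v)) ->
  forall u, unit_vec u ->
  contains_translate (proj_set (lin_image M L) u) (proj_set (lin_image M K) u).
Proof.
move=> hM H u hu.
set w := u *m invmx M.
have w0 : dotv w w != 0.
  apply/eqP => /dotv_eq0 w0.
  have : u = 0 by rewrite -[u](mulmxKV hM) -/w w0 mul0mx.
  by move=> u0; move: hu; rewrite /unit_vec u0 /dotv mul0mx mxE => /eqP; rewrite eq_sym oner_eq0.
set s := Num.sqrt (dotv w w).
have s0 : s != 0 by rewrite /s sqrtr_eq0 -ltNge lt_def w0 dotv_ge0.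
set v := s^-1 *: w.
have hv : unit_vec v.
  rewrite /unit_vec /v dotvZl dotvZr mulrA -expr2 exprVn sqr_sqrtr ?dotv_ge0 //.
  by rewrite mulVf.
have key : forall x, proj_perp u (proj_perp v x *m M) = proj_perp u (x *m M).
  move=> x; rewrite /proj_perp mulmxBl -scalemxAl /v -scalemxAl /w mulmxKV //.
  rewrite -/(proj_perp u _) -/(proj_perp u (x *m M)).
  rewrite projD.
  have -> : - (dotv x (s^-1 *: w) *: (s^-1 *: u)) =
     (- (dotv x (s^-1 *: w) * s^-1)) *: u by rewrite scalerA scaleNr.
  by rewrite projZ proj_self // scaler0 addr0.
have [t Ht] := H v hv.
exists (proj_perp u (t *m M)).
move=> _ [_ [_ [k Kk <-] <-] <-].
have : (proj_perp v k + t) \in proj_set L v.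
  by rewrite inE; apply: Ht; exists (proj_perp v k) => //; exists k.
rewrite inE => -[l Ll El].
exists (l *m M); first by exists l.
by rewrite -key El mulmxDl projD key.
Qed.

End Aux.

Theorem proposition4p1 (R : realType) (n : nat) (K L : set 'rV[R]_n)
  (psi : 'M[R]_n) :
  compact K -> convex_set K -> compact L -> convex_set L ->
  psi \in unitmx ->
  ((forall u : 'rV[R]_n, unit_vec u ->
      contains_translate (proj_set L u) (proj_set K u)) <->
   (forall u : 'rV[R]_n, unit_vec u ->
      contains_translate (proj_set (lin_image psi L) u)
                         (proj_set (lin_image psi K) u))).
Proof.
move=> _ _ _ _ hM; split; first exact: main.
move=> H.
have inv : forall S : set 'rV[R]_n, lin_image (invmx psi) (lin_image psi S) = S.
  move=> S; apply/seteqP; split.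
    by move=> _ [_ [x Sx <-] <-]; rewrite mulmxK.
  by move=> x Sx; exists (x *m psi); [exists x | rewrite mulmxK].
move=> u hu.
have hi : invmx psi \in unitmx by rewrite unitmx_inv.
have := @main R n (invmx psi) (lin_image psi K) (lin_image psi L) hi H u hu.
by rewrite !inv.
Qed.
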